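(* Let $\mathbf Q\in\{0,1\}^{J\times K}$ be a fixed $Q$-matrix with rows $\boldsymbol q_j$, let $\mathcal E$ be an attribute hierarchy on $[K]$ with permissible set $\mathcal A=\mathcal A(\mathcal E)$, and let $\Gamma^{\mathcal A}\in\{0,1\}^{J\times|\mathcal A|}$ be given by $\Gamma^{\mathcal A}_{j,\boldsymbol\alpha}=\mathbb 1(\boldsymbol\alpha\succeq\boldsymbol q_j)$. Suppose: (A) there exist two disjoint item sets $S_1,S_2\subseteq[J]$ such that for $i=1,2$ the submatrix $\Gamma^{(S_i,\mathcal A)}$ (rows in $S_i$) has pairwise distinct columns, and $S_1,S_2$ induce the same partial order on $\mathcal A$, i.e. for all $\boldsymbol\alpha,\boldsymbol\alpha'\in\mathcal A$, $\boldsymbol\alpha\succeq_{S_1}\boldsymbol\alpha'$ iff $\boldsymbol\alpha\succeq_{S_2}\boldsymbol\alpha'$; (B) for any distinct $\boldsymbol\alpha,\boldsymbol\alpha'\in\mathcal A$ with $\boldsymbol\alpha'\succeq_{S_i}\boldsymbol\alpha$ for $i=1$ or $i=2$, there exists an item $j\notin S_1\cup S_2$ with $\Gamma^{\mathcal A}_{j,\boldsymbol\alpha}\neq\Gamma^{\mathcal A}_{j,\boldsymbol\alpha'}$; (C) no column of $\Gamma^{\mathcal A}$ equals any column of $\Gamma^{\mathcal A^c}$, where $\mathcal A^c=\{0,1\}^K\setminus\mathcal A$ and $\Gamma^{\mathcal A^c}_{j,\boldsymbol\alpha}=\mathbb 1(\boldsymbol\alpha\succeq\boldsymbol q_j)$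 for $\boldsymbol\alpha\in\mathcal A^c$. Then the LCBN-based cognitive diagnostic model with hierarchy $\mathcal E$ is strictly identifiable: for any valid parameters $(\boldsymbol\Theta,\boldsymbol t)$ and any alternative $(\bar{\mathcal E},\bar{\boldsymbol\Theta},\bar{\boldsymbol t})$ (same $\mathbf Q$) such that $\bar{\mathcal E}$ has at most $|\mathcal A(\mathcal E)|$ permissible patterns, if $\mathbb P(\mathbf R=\boldsymbol r\mid\mathcal E,\boldsymbol\Theta,\boldsymbol t)=\mathbb P(\mathbf R=\boldsymbol r\mid\bar{\mathcal E},\bar{\boldsymbol\Theta},\bar{\boldsymbol t})$ for all $\boldsymbol r\in\{0,1\}^J$, then $(\mathcal E,\boldsymbol\Theta,\boldsymbol t)=(\bar{\mathcal E},\bar{\boldsymbol\Theta},\bar{\boldsymbol t})$.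
   Context: Attribute hierarchy: a set $\mathcal E$ of prerequisite relations $k\to\ell$ on $[K]$ (all prerequisite relations, so irreflexive, acyclic, transitively closed); $\mathcal A(\mathcal E)=\{\boldsymbol\alpha\in\{0,1\}^K:\alpha_\ell=1\Rightarrow\alpha_k=1\text{ whenever }k\to\ell\in\mathcal E\}$; $\mathrm{pa}(k)=\{\ell:\ell\to k\in\mathcal E\}$. LCBN: with $\boldsymbol t\in(0,1)^K$, $p_{\boldsymbol\alpha}=\prod_{k=1}^K t_k^{\alpha_k\pi_k}(1-t_k)^{(1-\alpha_k)\pi_k}$, $\pi_k=\prod_{\ell\in\mathrm{pa}(k)}\alpha_\ell$ (empty product $1$, $0^0=1$); $p_{\boldsymbol\alpha}=0$ off $\mathcal A(\mathcal E)$. Measurement model: item parameters $\boldsymbol\Theta=(\theta_{j,\boldsymbol\alpha})_{j\in[J],\boldsymbol\alpha\in\mathcal A(\mathcal E)}$, $\theta_{j,\boldsymbol\alpha}=\mathbb P(R_j=1\mid\boldsymbol\alpha)\in(0,1)$, responses conditionally independent given $\boldsymbol\alpha$, and valid parameters satisfy: $\theta_{j,\boldsymbol\alpha}=\theta_{j,\boldsymbol\alpha'}$ whenever $\boldsymbol\alpha\succeq\boldsymbol q_j$ and $\boldsymbol\alpha'\succeq\boldsymbol q_j$, and $\theta_{j,\boldsymbol\alpha}>\theta_{j,\boldsymbol\alpha'}$ whenever $\boldsymbol\alpha\succeq\boldsymbol q_j$ and $\boldsymbol\alpha'\not\succeq\boldsymbol q_j$ ($\succeq$ is componentwise $\ge$).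 Observed distribution: $\mathbb P(\mathbf R=\boldsymbol r)=\sum_{\boldsymbol\alpha\in\mathcal A(\mathcal E)}p_{\boldsymbol\alpha}\prod_j\theta_{j,\boldsymbol\alpha}^{r_j}(1-\theta_{j,\boldsymbol\alpha})^{1-r_j}$. For $S\subseteq[J]$ and $\boldsymbol\alpha,\boldsymbol\alpha'\in\mathcal A$, $\boldsymbol\alpha\succeq_S\boldsymbol\alpha'$ means $\Gamma^{\mathcal A}_{j,\boldsymbol\alpha}\ge\Gamma^{\mathcal A}_{j,\boldsymbol\alpha'}$ for all $j\in S$. *)

(* Defs.v *)
From HB Require Import structures.
From mathcomp Require Import all_boot all_order all_algebra.
From mathcomp Require Import reals.
Set Implicit Arguments. Unset Strict Implicit. Unset Printing Implicit Defensive.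
Import Order.TTheory GRing.Theory Num.Theory.
Local Open Scope ring_scope.

Definition pattern (K : nat) := {ffun 'I_K -> bool}.

Definition qmatrix (J K : nat) := 'I_J -> 'I_K -> bool.

(* An attribute hierarchy: the set of prerequisite relations E k l (k -> l);
   irreflexive, acyclic and transitively closed. *)
Definition acyclic_rel (K : nat) (E : rel 'I_K) : Prop :=
  forall (s : seq 'I_K) (k : 'I_K), ~ path E k (rcons s k).

Definition is_hierarchy (K : nat) (E : rel 'I_K) : Prop :=
  [/\ (forall k, ~~ E k k), acyclic_rel E &
      (forall k l m, E k l -> E l m -> E k m)].

Definition permissible (K : nat) (E : rel 'I_K) (a : pattern K) : bool :=
  [forall k, forall l, E k l ==> (a l ==> a k)].

Definition pat_ge (K : nat) (a b : pattern K) : bool := [forall k, b k ==> a k].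

Definition Gamma (J K : nat) (Q : qmatrix J K) (j : 'I_J) (a : pattern K) : bool :=
  [forall k, Q j k ==> a k].

Definition pik (K : nat) (E : rel 'I_K) (a : pattern K) (k : 'I_K) : bool :=
  [forall l, E l k ==> a l].

Definition lcbn_prob (R : realType) (K : nat) (E : rel 'I_K) (t : 'I_K -> R)
    (a : pattern K) : R :=
  if permissible E a then
    \prod_(k < K) (if pik E a k then (if a k then t k else 1 - t k) else 1)
  else 0.

Definition valid_t (R : realType) (K : nat) (t : 'I_K -> R) : Prop :=
  forall k, 0 < t k < 1.

(* Valid item parameters Theta (only the values on A(E) are meaningful). *)
Definition valid_theta (R : realType) (J K : nat) (Q : qmatrix J K)
    (E : rel 'I_K) (Th : 'I_J -> pattern K -> R) : Prop :=
  forall j a b, permissible E a -> permissible E b ->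
    [/\ 0 < Th j a < 1,
        (Gamma Q j a -> Gamma Q j b -> Th j a = Th j b) &
        (Gamma Q j a -> ~~ Gamma Q j b -> Th j b < Th j a)].

Definition resp_prob (R : realType) (J K : nat) (E : rel 'I_K)
    (Th : 'I_J -> pattern K -> R) (t : 'I_K -> R) (r : {ffun 'I_J -> bool}) : R :=
  \sum_(a : pattern K | permissible E a)
     lcbn_prob E t a *
       \prod_(j < J) (if r j then Th j a else 1 - Th j a).

Definition ge_on (J K : nat) (Q : qmatrix J K) (S : {set 'I_J}) (a b : pattern K) : bool :=
  [forall j in S, Gamma Q j b ==> Gamma Q j a].

Definition distinct_cols (J K : nat) (Q : qmatrix J K) (E : rel 'I_K) (S : {set 'I_J}) : Prop :=
  forall a b : pattern K, permissible E a -> permissible E b -> a != b ->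
    exists2 j, j \in S & Gamma Q j a != Gamma Q j b.

(* Main.v *)
Require Import Defs.
From HB Require Import structures.
From mathcomp Require Import all_boot all_order all_algebra.
From mathcomp Require Import reals.
From mathcomp Require Import ring lra.
Set Implicit Arguments. Unset Strict Implicit. Unset Printing Implicit Defensive.
Import Order.TTheory GRing.Theory Num.Theory.
Local Open Scope ring_scope.

Definition resp (J : nat) := {ffun 'I_J -> bool}.

Definition piw (R : realType) (J : nat) (th : 'I_J -> R) (r : resp J) : R :=
  \prod_(j < J) (if r j then th j else 1 - th j).

Definition ev (R : realType) (J : nat) (th : 'I_J -> R) (w : resp J -> R) : R :=
  \sum_(r : resp J) w r * piw th r.

Definition dep (R : realType) (J : nat) (S : {set 'I_J}) (w : resp J -> R) : Prop :=
  forall r r' : resp J, (forall j, j \in S -> r j = r' j) -> w r = w r'.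

Lemma ev_ext (R : realType) (J : nat) (th : 'I_J -> R) (w w' : resp J -> R) :
  (forall r, w r = w' r) -> ev th w = ev th w'.
Proof. by move=> h; apply: eq_bigr => r _; rewrite h. Qed.

Lemma ev_prodg (R : realType) (J : nat) (th : 'I_J -> R) (g : 'I_J -> bool -> R) :
  ev th (fun r => \prod_j g j (r j)) = \prod_j (g j true * th j + g j false * (1 - th j)).
Proof.
rewrite /ev /piw.
transitivity (\sum_(r : resp J) \prod_j (g j (r j) * (if r j then th j else 1 - th j))).
  by apply: eq_bigr => r _; rewrite big_split.
rewrite -(bigA_distr_bigA (fun j b => g j b * (if b then th j else 1 - th j))) /=.
by apply: eq_bigr => j _; rewrite big_bool.
Qed.

Lemma ev_prod (R : realType) (J : nat) (th : 'I_J -> R) (P : pred 'I_J) (g : 'I_J -> bool -> R) :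
  ev th (fun r => \prod_(j | P j) g j (r j)) =
  \prod_(j | P j) (g j true * th j + g j false * (1 - th j)).
Proof.
rewrite (ev_ext _ (w' := fun r => \prod_j (if P j then g j (r j) else 1))); last first.
  by move=> r; rewrite big_mkcond.
have := ev_prodg th (fun j b => if P j then g j b else 1).
rewrite /= => ->.
rewrite [RHS]big_mkcond; apply: eq_bigr => j _ /=.
by case: (P j) => //; ring.
Qed.

Lemma ev_lin (R : realType) (J : nat) (th : 'I_J -> R) (c : R) (w1 w2 : resp J -> R) :
  ev th (fun r => c * w1 r + w2 r) = c * ev th w1 + ev th w2.
Proof.
rewrite /ev big_distrr -big_split /=; apply: eq_bigr => r _; ring.
Qed.

Lemma ev_const (R : realType) (J : nat) (th : 'I_J -> R) (c : R) :
  ev th (fun _ => c) = c.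
Proof.
have h1 : ev th (fun _ => 1) = 1.
  have := ev_prodg th (fun _ _ => 1).
  have -> : \prod_j (1 * th j + 1 * (1 - th j)) = 1.
    by rewrite big1 // => j _; ring.
  move=> h; apply: (etrans _ h); apply: ev_ext => r; by rewrite big1.
have h0 : ev th (fun _ => 0) = 0 by rewrite /ev big1 // => r _; rewrite mul0r.
rewrite (ev_ext _ (w' := fun r => c * 1 + 0)); last by move=> r; rewrite mulr1 addr0.
by rewrite ev_lin h0 h1 mulr1 addr0.
Qed.

Definition mixr (J : nat) (S : {set 'I_J}) (r r' : resp J) : resp J :=
  [ffun j => if j \in S then r j else r' j].

Lemma mixrK (J : nat) (S : {set 'I_J}) :
  cancel (fun p : resp J * resp J => (mixr S p.1 p.2, mixr S p.2 p.1))
         (fun p : resp J * resp J => (mixr S p.1 p.2, mixr S p.2 p.1)).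
Proof.
case=> r r' /=; congr pair; apply/ffunP => j; rewrite !ffunE;
  by case: (j \in S).
Qed.

Lemma piw_mix (R : realType) (J : nat) (th : 'I_J -> R) (S : {set 'I_J}) (r r' : resp J) :
  piw th (mixr S r r') * piw th (mixr S r' r) = piw th r * piw th r'.
Proof.
rewrite /piw -!big_split /=; apply: eq_bigr => j _; rewrite !ffunE.
by case: (j \in S) => //; rewrite mulrC.
Qed.

Lemma ev_mul (R : realType) (J : nat) (th : 'I_J -> R) (S : {set 'I_J}) (w1 w2 : resp J -> R) :
  dep S w1 -> dep (~: S) w2 ->
  ev th (fun r => w1 r * w2 r) = ev th w1 * ev th w2.
Proof.
move=> d1 d2.
have e1 : \sum_(r : resp J) piw th r = 1.
  by rewrite -[RHS](ev_const th 1); apply: eq_bigr => r _; rewrite mul1r.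
rewrite /ev big_distrl /=.
under eq_bigr do rewrite big_distrr /=.
rewrite pair_bigA /= (reindex_inj (can_inj (mixrK S))) /=.
transitivity (\sum_(p : resp J * resp J) (w1 p.1 * w2 p.1 * piw th p.1) * piw th p.2).
  rewrite -(pair_bigA _ (fun r r' => (w1 r * w2 r * piw th r) * piw th r')) /=.
  apply: eq_bigr => r _.
  by rewrite -big_distrr /= e1 mulr1.
apply: eq_bigr => [[r r']] _ /=.
have -> : w1 (mixr S r r') = w1 r by apply: d1 => j jS; rewrite ffunE jS.
have -> : w2 (mixr S r' r) = w2 r.
  by apply: d2 => j; rewrite inE ffunE => /negbTE ->.
rewrite mulrACA piw_mix; ring.
Qed.

Lemma resp_ev (R : realType) (J K : nat) (E : rel 'I_K) (Th : 'I_J -> pattern K -> R)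
  (t : 'I_K -> R) (w : resp J -> R) :
  \sum_(r : resp J) w r * resp_prob E Th t r =
  \sum_(a | permissible E a) lcbn_prob E t a * ev (fun j => Th j a) w.
Proof.
rewrite /resp_prob.
under eq_bigr do rewrite big_distrr /=.
rewrite exchange_big /=; apply: eq_bigr => a _.
rewrite /ev big_distrr /=; apply: eq_bigr => r _; rewrite /piw; ring.
Qed.

Lemma ev_sum (R : realType) (J : nat) (I : finType) (P : pred I) (th : 'I_J -> R)
  (c : I -> R) (w : I -> resp J -> R) :
  ev th (fun r => \sum_(i | P i) c i * w i r) = \sum_(i | P i) c i * ev th (w i).
Proof.
rewrite /ev.
under eq_bigr do rewrite big_distrl /=.
rewrite exchange_big /=; apply: eq_bigr => i _.
rewrite big_distrr /=; apply: eq_bigr => r _; ring.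
Qed.

Lemma dep_mono (R : realType) (J : nat) (S S' : {set 'I_J}) (w : resp J -> R) :
  S \subset S' -> dep S w -> dep S' w.
Proof. by move=> sub d r r' h; apply: d => j jS; apply: h; apply: (subsetP sub). Qed.

Lemma dep_cst (R : realType) (J : nat) (S : {set 'I_J}) (c : R) : dep S (fun _ => c).
Proof. by []. Qed.

Lemma dep_mul (R : realType) (J : nat) (S : {set 'I_J}) (w1 w2 : resp J -> R) :
  dep S w1 -> dep S w2 -> dep S (fun r => w1 r * w2 r).
Proof. by move=> d1 d2 r r' h; rewrite (d1 r r' h) (d2 r r' h). Qed.

Lemma dep_prod (R : realType) (J : nat) (S : {set 'I_J}) (P : pred 'I_J) (g : 'I_J -> bool -> R) :
  (forall j, P j -> j \in S) -> dep S (fun r => \prod_(j | P j) g j (r j)).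
Proof. by move=> hP r r' h; apply: eq_bigr => j /hP /h ->. Qed.

Lemma dep_lin (R : realType) (J : nat) (S : {set 'I_J}) (I : finType) (P : pred I)
  (c : I -> R) (w : I -> resp J -> R) (c0 : R) (w0 : resp J -> R) :
  dep S w0 -> (forall i, P i -> dep S (w i)) ->
  dep S (fun r => (w0 r - \sum_(i | P i) c i * w i r) * c0).
Proof.
move=> d0 d r r' h; rewrite (d0 r r' h).
by rewrite (eq_bigr (fun i => c i * w i r')) // => i /d di; rewrite (di r r' h).
Qed.

Definition ones (K : nat) : pattern K := [ffun => true].

Lemma perm_ones (K : nat) (E : rel 'I_K) : permissible E (ones K).
Proof. by apply/forallP => k; apply/forallP => l; rewrite !ffunE !implybT. Qed.

Lemma gamma_ones (J K : nat) (Q : qmatrix J K) j : Gamma Q j (ones K).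
Proof. by apply/forallP => k; rewrite ffunE implybT. Qed.

Lemma gammaE (R : realType) (J K : nat) (Q : qmatrix J K) (E : rel 'I_K)
  (Th : 'I_J -> pattern K -> R) j a :
  valid_theta Q E Th -> permissible E a -> Gamma Q j a = (Th j a == Th j (ones K)).
Proof.
move=> vT pa; have [_ h1 h2] := vT j (ones K) a (perm_ones E) pa.
case G: (Gamma Q j a).
  by rewrite (h1 (gamma_ones Q j) G) eqxx.
by rewrite lt_eqF // h2 // ?G // gamma_ones.
Qed.

Lemma th_le (R : realType) (J K : nat) (Q : qmatrix J K) (E : rel 'I_K)
  (Th : 'I_J -> pattern K -> R) j a :
  valid_theta Q E Th -> permissible E a -> Th j a <= Th j (ones K).
Proof.
move=> vT pa; have [_ h1 h2] := vT j (ones K) a (perm_ones E) pa.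
case G: (Gamma Q j a).
  by rewrite (h1 (gamma_ones Q j) G).
by rewrite ltW // h2 // ?G // gamma_ones.
Qed.

Lemma th_lt (R : realType) (J K : nat) (Q : qmatrix J K) (E : rel 'I_K)
  (Th : 'I_J -> pattern K -> R) j a :
  valid_theta Q E Th -> permissible E a -> ~~ Gamma Q j a -> Th j a < Th j (ones K).
Proof.
move=> vT pa G; have [_ h1 h2] := vT j (ones K) a (perm_ones E) pa.
by rewrite h2 // gamma_ones.
Qed.

Lemma ev_scale (R : realType) (J : nat) (th : 'I_J -> R) (c : R) (w : resp J -> R) :
  ev th (fun r => c * w r) = c * ev th w.
Proof. by rewrite /ev big_distrr; apply: eq_bigr => r _ /=; ring. Qed.

Lemma ev_comb (R : realType) (J : nat) (I : finType) (P : pred I) (th : 'I_J -> R)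
  (c : I -> R) (w : I -> resp J -> R) (c0 : R) (w0 : resp J -> R) :
  ev th (fun r => (w0 r - \sum_(i | P i) c i * w i r) * c0) =
  (ev th w0 - \sum_(i | P i) c i * ev th (w i)) * c0.
Proof.
rewrite (ev_ext _ (w' := fun r => c0 * w0 r + (- c0) * (\sum_(i | P i) c i * w i r))).
  by rewrite ev_lin ev_scale ev_sum; ring.
by move=> r; ring.
Qed.

Lemma ev_hprod (R : realType) (J : nat) (th h : 'I_J -> R) (T : pred 'I_J) :
  ev th (fun r => \prod_(j | T j) ((r j)%:R - h j)) = \prod_(j | T j) (th j - h j).
Proof. rewrite (ev_prod th T (fun j (b : bool) => b%:R - h j)); apply: eq_bigr => j _ /=; rewrite ?mulr1n ?mulr0n; ring. Qed.

Lemma ev_item (R : realType) (J : nat) (th : 'I_J -> R) (j0 : 'I_J) :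
  ev th (fun r => (r j0)%:R) = th j0.
Proof.
have := ev_hprod th (fun _ => 0) (pred1 j0).
rewrite big_pred1_eq subr0 => <-; apply: ev_ext => r.
by rewrite big_pred1_eq subr0.
Qed.

Lemma hprod_neq0 (R : realType) (J K : nat) (Q : qmatrix J K) (E : rel 'I_K)
  (Th : 'I_J -> pattern K -> R) (T : pred 'I_J) g :
  valid_theta Q E Th -> permissible E g ->
  (\prod_(j | T j) (Th j g - Th j (ones K)) != 0) = [forall j, T j ==> ~~ Gamma Q j g].
Proof.
move=> vT pg; apply/prodf_neq0/forallP => [h j|h j Tj].
  by apply/implyP => /h; rewrite subr_eq0 (gammaE _ vT).
by move: (h j); rewrite Tj /= subr_eq0 (gammaE _ vT).
Qed.

Lemma ge_on_trans (J K : nat) (Q : qmatrix J K) (S : {set 'I_J}) a b c :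
  ge_on Q S a b -> ge_on Q S b c -> ge_on Q S a c.
Proof.
move=> /forall_inP h1 /forall_inP h2; apply/forall_inP => j jS; apply/implyP => G.
by move: (h2 j jS) => /implyP /(_ G) G'; move: (h1 j jS) => /implyP /(_ G').
Qed.

Lemma ge_on_antisym (J K : nat) (Q : qmatrix J K) (E : rel 'I_K) (S : {set 'I_J}) a b :
  distinct_cols Q E S -> permissible E a -> permissible E b ->
  ge_on Q S a b -> ge_on Q S b a -> a = b.
Proof.
move=> dc pa pb /forall_inP h1 /forall_inP h2; apply/eqP; apply/negPn/negP => ne.
have [j jS] := dc a b pa pb ne; move: (h1 j jS) (h2 j jS).
by case: (Gamma Q j a); case: (Gamma Q j b).
Qed.

Lemma ge_on_hprod (J K : nat) (Q : qmatrix J K) (S : {set 'I_J}) a g :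
  [forall j, ((j \in S) && ~~ Gamma Q j a) ==> ~~ Gamma Q j g] = ge_on Q S a g.
Proof.
apply/forallP/forall_inP => h j.
  move=> jS; move: (h j); rewrite jS /=.
  by case: (Gamma Q j a); case: (Gamma Q j g).
case jS: (j \in S) => //=; move: (h j jS).
by case: (Gamma Q j a); case: (Gamma Q j g).
Qed.

Lemma sum_delta (R : realType) (T : finType) (P : pred T) (c : T -> R) (x : T) :
  \sum_(g | P g) c g * (x == g)%:R = if P x then c x else 0.
Proof.
case Px: (P x).
  rewrite (bigD1 x) //= eqxx mulr1 big1 ?addr0 // => g /andP [_ ne].
  by rewrite eq_sym (negbTE ne) mulr0.
by rewrite big1 // => g Pg; case: eqP => [e|]; [rewrite e Pg in Px | rewrite mulr0].
Qed.

Lemma leftinv (R : realType) (J K : nat) (Q : qmatrix J K) (E : rel 'I_K)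
  (Th : 'I_J -> pattern K -> R) (S : {set 'I_J}) :
  valid_theta Q E Th -> distinct_cols Q E S ->
  forall a, permissible E a -> exists u : resp J -> R,
    dep S u /\ forall g, permissible E g -> ev (Th^~ g) u = (g == a)%:R.
Proof.
move=> vT dc.
pose h j := Th j (ones K).
pose D a := [set g | permissible E g && ge_on Q S a g && (g != a)].
suff: forall n a, (#|D a| < n)%N -> permissible E a -> exists u : resp J -> R,
    dep S u /\ forall g, permissible E g -> ev (Th^~ g) u = (g == a)%:R.
  by move=> H a; apply: (H #|D a|.+1).
elim=> [//|n IH] a ltn pa.
have IHD : forall g, exists u : resp J -> R, g \in D a ->
    dep S u /\ forall g', permissible E g' -> ev (Th^~ g') u = (g' == g)%:R.
  move=> g; case gD: (g \in D a); last by exists (fun _ => 0).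
  move: (gD); rewrite inE => /andP [/andP [pg gag] nga].
  have prop : D g \proper D a.
    apply/properP; split.
      apply/subsetP => d; rewrite !inE => /andP [/andP [pd gd] ndg].
      rewrite pd (ge_on_trans gag gd) /=; apply/eqP => eda.
      rewrite eda in gd.
      by rewrite (ge_on_antisym dc pg pa gd gag) eqxx in nga.
    by exists g; rewrite // inE eqxx andbF.
  have [u [du hu]] := IH g (leq_trans (proper_card prop) ltn) pg.
  by exists u.
have [uf huf] := fin_all_exists IHD.
pose phi := fun r : resp J => \prod_(j | (j \in S) && ~~ Gamma Q j a) ((r j)%:R - h j).
pose c g := ev (Th^~ g) phi.
have cE : forall g, permissible E g -> (c g != 0) = ge_on Q S a g.
  move=> g pg; rewrite /c /phi ev_hprod.
  by rewrite (hprod_neq0 _ vT pg) ge_on_hprod.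
have ca : c a != 0.
  by rewrite cE //; apply/forall_inP => j _; apply/implyP.
exists (fun r => (phi r - \sum_(g in D a) c g * uf g r) * (c a)^-1); split.
  apply: (@dep_lin R J S _ (fun g => g \in D a) c uf (c a)^-1 phi); first by apply: (@dep_prod R J S (fun j => (j \in S) && ~~ Gamma Q j a) (fun j (b : bool) => b%:R - h j)) => j /andP [].
  by move=> g gD; case: (huf g gD).
move=> d pd; rewrite ev_comb.
rewrite (eq_bigr (fun g => c g * (d == g)%:R)); last first.
  by move=> g gD; case: (huf g gD) => _ ->.
rewrite sum_delta -/(c d).
case: (eqVneq d a) => [->|nda].
  have -> : (a \in D a) = false by rewrite inE eqxx andbF.
  by rewrite subr0 divff.
case dD: (d \in D a); first by rewrite subrr mul0r.
suff -> : c d = 0 by rewrite subrr mul0r.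
apply/eqP; apply/negPn; rewrite cE //; apply/negP => gad.
by move: dD; rewrite inE pd gad nda.
Qed.
Lemma orth (R : realType) (T : finType) (P1 P2 : pred T) (x y : T -> T -> R) (d : T -> R) :
  (#|P2| <= #|P1|)%N -> (forall a, P1 a -> d a != 0) ->
  (forall a a', P1 a -> P1 a' ->
     \sum_(b | P2 b) x a b * y a' b = if a == a' then d a else 0) ->
  forall b b', P2 b -> P2 b' ->
  \sum_(a | P1 a) y a b * (d a)^-1 * x a b' = (b == b')%:R.
Proof.
move=> hc hd hxy b b' hb hb'.
pose m := #|P1|; pose n := #|P2|.
pose e1 := fun i : 'I_m => enum_val (A := P1) i.
pose e2 := fun k : 'I_n => enum_val (A := P2) k.
have e1P : forall i, P1 (e1 i) by move=> i; have := enum_valP i.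
have e2P : forall k, P2 (e2 k) by move=> k; have := enum_valP k.
pose X : 'M[R]_(m, n) := \matrix_(i, k) x (e1 i) (e2 k).
pose Y : 'M[R]_(m, n) := \matrix_(i, k) y (e1 i) (e2 k).
pose D : 'M[R]_m := diag_mx (\row_i d (e1 i)).
pose Di : 'M[R]_m := diag_mx (\row_i (d (e1 i))^-1).
have hXY : X *m Y^T = D.
  apply/matrixP => i i'; rewrite !mxE.
  transitivity (\sum_(bb in P2) x (e1 i) bb * y (e1 i') bb).
    rewrite [RHS]big_enum_val /=; apply: eq_bigr => k _.
    by rewrite !mxE.
  rewrite hxy // (inj_eq enum_val_inj); case: eqP => [->|]; first by rewrite mulr1n.
  by rewrite mulr0n.
have hDDi : D *m Di = 1%:M.
  apply/matrixP => i i'; rewrite mul_mx_diag !mxE.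
  case: (eqVneq i i') => [<-|ne]; last by rewrite !mulr0n mul0r.
  by rewrite !mulr1n divff // hd.
have [Du _] := mulmx1_unit hDDi.
have rX : row_full X.
  rewrite /row_full eqn_leq rank_leq_col /=.
  apply: leq_trans hc _.
  by rewrite -[X in (X <= _)%N](mxrank_unit Du) -hXY mxrankM_maxl.
have [Z hZ] := row_fullP rX.
have hI : Y^T *m Di *m X = 1%:M.
  by rewrite -hZ -[in LHS](mul1mx (Y^T)) -hZ -!mulmxA (mulmxA X) hXY (mulmxA D) hDDi mul1mx.
have [k hk] : exists k, b = e2 k.
  by exists (enum_rank_in hb b); rewrite /e2 enum_rankK_in.
have [k' hk'] : exists k, b' = e2 k.
  by exists (enum_rank_in hb' b'); rewrite /e2 enum_rankK_in.
have := congr1 (fun M : 'M[R]_n => M k k') hI; rewrite /= mul_mx_diag !mxE.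
rewrite hk hk' (inj_eq enum_val_inj) => <-.
rewrite big_enum_val; apply: eq_bigr => i _; rewrite !mxE; ring.
Qed.

Lemma dep_item (R : realType) (J : nat) (S : {set 'I_J}) j :
  j \in S -> dep S (fun r : resp J => ((r j)%:R : R)).
Proof. by move=> jS r r' h; rewrite h. Qed.

Lemma half (R : realType) (J K : nat) (Q : qmatrix J K) (E Eb : rel 'I_K)
  (Th Thb : 'I_J -> pattern K -> R) (p pb : pattern K -> R) (S1 S2 : {set 'I_J})
  (a b : pattern K -> pattern K -> R) :
  valid_theta Q E Th ->
  (forall x, permissible E x -> 0 < p x) ->
  (forall y, permissible Eb y -> 0 < pb y) ->
  (#|[pred y | permissible Eb y]| <= #|[pred x | permissible E x]|)%N ->
  (forall x x', permissible E x -> permissible E x' -> x != x' -> ge_on Q S1 x' x ->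
      exists2 j, j \notin S1 :|: S2 & Gamma Q j x != Gamma Q j x') ->
  (forall x x' (g : resp J -> R), permissible E x -> permissible E x' ->
     dep (~: (S1 :|: S2)) g ->
     \sum_(y | permissible Eb y) pb y * a x y * b x' y * ev (Thb^~ y) g
       = (x == x')%:R * p x * ev (Th^~ x) g) ->
  (forall x (v : resp J -> R), permissible E x -> dep S1 v ->
     \sum_(y | permissible Eb y) pb y * b x y * ev (Thb^~ y) v = p x * ev (Th^~ x) v) ->
  forall y, permissible Eb y -> exists2 x, permissible E x &
    (forall x', permissible E x' -> a x' y = (x' == x)%:R) /\
    (forall j, j \notin S2 -> Thb j y = Th j x).
Proof.
move=> vT pp ppb card hB H1 H2.
have pn0 : forall x, permissible E x -> p x != 0 by move=> x /pp /lt0r_neq0.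
have pbn0 : forall y, permissible Eb y -> pb y != 0 by move=> y /ppb /lt0r_neq0.
have O := @orth R _ (permissible E) (permissible Eb) (fun x y => pb y * a x y) b p card pn0.
have {}O : forall y y', permissible Eb y -> permissible Eb y' ->
  \sum_(x | permissible E x) b x y * (p x)^-1 * (pb y' * a x y') = (y == y')%:R.
  apply: O => x x' px px'; have := H1 x x' (fun _ => 1) px px' (@dep_cst R J _ 1).
  rewrite !ev_const !mulr1 => h.
  transitivity ((x == x')%:R * p x); last by case: eqP => _; rewrite ?mul1r ?mul0r.
  by rewrite -h; apply: eq_bigr => y _; rewrite ev_const mulr1.
have R1 : forall x y (g : resp J -> R), permissible E x -> permissible Eb y ->
    dep (~: (S1 :|: S2)) g ->
    pb y * a x y * ev (Thb^~ y) g = ev (Th^~ x) g * (pb y * a x y).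
  move=> x y g px py dg.
  transitivity (\sum_(y' | permissible Eb y') pb y' * a x y' * ev (Thb^~y') g * (y == y')%:R).
    by rewrite sum_delta py.
  transitivity (\sum_(y' | permissible Eb y') pb y' * a x y' * ev (Thb^~y') g *
      \sum_(x' | permissible E x') b x' y' * (p x')^-1 * (pb y * a x' y)).
    by apply: eq_bigr => y' py'; rewrite O // eq_sym.
  under eq_bigr do rewrite big_distrr /=.
  rewrite exchange_big /=.
  transitivity (\sum_(x' | permissible E x')
     (p x * ev (Th^~ x) g * ((p x')^-1 * (pb y * a x' y))) * (x == x')%:R).
    apply: eq_bigr => x' px'.
    have := H1 x x' g px px' dg.
    move=> h.
    transitivity ((\sum_(y' | permissible Eb y') pb y' * a x y' * b x' y' * ev (Thb^~ y') g) *
                  ((p x')^-1 * (pb y * a x' y))).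
      by rewrite big_distrl /=; apply: eq_bigr => y' _; ring.
    rewrite h; ring.
  rewrite sum_delta px; field; exact: pn0.
have R2 : forall y (v : resp J -> R), permissible Eb y -> dep S1 v ->
    ev (Thb^~ y) v = \sum_(x | permissible E x) a x y * ev (Th^~ x) v.
  move=> y v py dv; apply: (mulfI (pbn0 y py)).
  transitivity (\sum_(y' | permissible Eb y') pb y' * ev (Thb^~y') v * (y == y')%:R).
    by rewrite sum_delta py.
  transitivity (\sum_(y' | permissible Eb y') pb y' * ev (Thb^~y') v *
      \sum_(x' | permissible E x') b x' y' * (p x')^-1 * (pb y * a x' y)).
    by apply: eq_bigr => y' py'; rewrite O // eq_sym.
  under eq_bigr do rewrite big_distrr /=.
  rewrite exchange_big /= big_distrr /=; apply: eq_bigr => x px.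
  have := H2 x v px dv => h.
  transitivity ((\sum_(y' | permissible Eb y') pb y' * b x y' * ev (Thb^~ y') v) *
                ((p x)^-1 * (pb y * a x y))).
    by rewrite big_distrl /=; apply: eq_bigr => y' _; ring.
  rewrite h; field; exact: pn0.
move=> y py.
pose h j := Th j (ones K).
have sum1 : \sum_(x | permissible E x) a x y = 1.
  have := R2 y (fun _ => 1) py (@dep_cst R J S1 1).
  rewrite ev_const => e; symmetry; rewrite e; apply: eq_bigr => x _.
  by rewrite ev_const mulr1.
have WW : forall x, permissible E x -> a x y != 0 ->
    forall j, j \notin S1 :|: S2 -> Thb j y = Th j x.
  move=> x px ax j jW.
  have jW' : j \in ~: (S1 :|: S2) by rewrite inE.
  have := R1 x y (fun r => (r j)%:R) px py (@dep_item R J _ j jW').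
  rewrite !ev_item => e; apply: (mulfI (mulf_neq0 (pbn0 y py) ax)).
  by rewrite e mulrC.
have incomp : forall x x', permissible E x -> permissible E x' -> a x y != 0 ->
    a x' y != 0 -> x != x' -> ~~ ge_on Q S1 x' x.
  move=> x x' px px' ax ax' ne; apply/negP => ge.
  have [j jW] := hB x x' px px' ne ge.
  by rewrite (gammaE _ vT px) (gammaE _ vT px') -(WW x px ax j jW) -(WW x' px' ax' j jW) eqxx.
have single : forall x1, permissible E x1 -> a x1 y != 0 -> forall T : pred 'I_J,
    (forall j, j \in S1 -> ~~ Gamma Q j x1 -> T j) ->
    \sum_(x | permissible E x) a x y * \prod_(j | T j) (Th j x - h j) =
    a x1 y * \prod_(j | T j) (Th j x1 - h j).
  move=> x1 px1 ax1 T hT; rewrite (bigD1 x1) //= [X in _ + X]big1 ?addr0 // => x /andP [px nx].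
  case: (eqVneq (a x y) 0) => [->|ax]; first by rewrite mul0r.
  have nge := incomp x x1 px px1 ax ax1 nx.
  suff /eqP -> : \prod_(j | T j) (Th j x - h j) == 0 by rewrite mulr0.
  apply/negPn/negP; rewrite (hprod_neq0 _ vT px) => /forallP hp.
  move/negP: nge; apply; rewrite -ge_on_hprod; apply/forallP => j.
  apply/implyP => /andP [jS nG].
  by have := hp j; rewrite (hT j jS nG).
have alt : forall T : pred 'I_J, (forall j, T j -> j \in S1) ->
    \prod_(j | T j) (Thb j y - h j) =
    \sum_(x | permissible E x) a x y * \prod_(j | T j) (Th j x - h j).
  move=> T hT.
  have := R2 y _ py (@dep_prod R J S1 T (fun j (b : bool) => b%:R - h j) hT).
  rewrite ev_hprod => ->; apply: eq_bigr => x _; by rewrite ev_hprod.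
have [x0 px0 ax0] : exists2 x0, permissible E x0 & a x0 y != 0.
  case: (boolP [exists x, permissible E x && (a x y != 0)]) => [/existsP [x /andP [px ax]]|/existsPn hn].
    by exists x.
  move: sum1; rewrite big1 => [/eqP|x px]; first by rewrite eq_sym oner_eq0.
  by move: (hn x); rewrite px /= negbK => /eqP.
have uniqa : forall x, permissible E x -> a x y != 0 -> x = x0.
  move=> x1 px1 ax1; apply/eqP/negPn/negP => ne.
  pose Z := fun x j => (j \in S1) && ~~ Gamma Q j x.
  have nzb : forall x, permissible E x -> a x y != 0 -> \prod_(j | Z x j) (Thb j y - h j) != 0.
    move=> x px ax; rewrite (alt (Z x)); last by move=> j /andP [].
    rewrite (single x px ax (Z x)); last by move=> j jS nG; rewrite /Z jS nG.
    rewrite mulf_neq0 // (hprod_neq0 _ vT px); apply/forallP => j; apply/implyP.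
    by case/andP.
  pose T := fun j => Z x1 j || Z x0 j.
  have : \prod_(j | T j) (Thb j y - h j) != 0.
    apply/prodf_neq0 => j /orP [] hj.
      by move/prodf_neq0: (nzb x1 px1 ax1); apply.
    by move/prodf_neq0: (nzb x0 px0 ax0); apply.
  rewrite (alt T); last by move=> j /orP [] /andP [].
  rewrite (single x1 px1 ax1 T); last by move=> j jS nG; rewrite /T /Z jS nG.
  move=> hne; move: (incomp x1 x0 px1 px0 ax1 ax0 ne) => /negP; apply.
  rewrite -ge_on_hprod; apply/forallP => j; apply/implyP => hz.
  have : \prod_(j | T j) (Th j x1 - h j) != 0.
    by apply: contraNneq hne => ->; rewrite mulr0.
  by rewrite (hprod_neq0 _ vT px1) => /forallP /(_ j); rewrite /T /Z hz orbT.
have aE : forall x', permissible E x' -> a x' y = (x' == x0)%:R.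
  move=> x' px'; case: (eqVneq x' x0) => [->|ne].
    move: sum1; rewrite (bigD1 x0) //= big1 ?addr0 // => x /andP [px nx].
    by apply/eqP/negPn/negP => ax; move: nx; rewrite (uniqa x px ax) eqxx.
  by apply/eqP/negPn/negP => ax; move: ne; rewrite (uniqa x' px' ax) eqxx.
exists x0 => //; split => // j jS2.
case jS1: (j \in S1); last by apply: WW => //; rewrite inE negb_or jS1.
have := R2 y _ py (@dep_item R J S1 j jS1); rewrite ev_item => ->.
rewrite (eq_bigr (fun x => Th j x * (x0 == x)%:R)); first by rewrite sum_delta px0.
by move=> x px; rewrite aE // ev_item mulrC eq_sym.
Qed.
Lemma perm_ext (K : nat) (E Eb : rel 'I_K) a :
  E =2 Eb -> permissible E a = permissible Eb a.
Proof. by move=> e; apply: eq_forallb => k; apply: eq_forallb => l; rewrite e. Qed.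

Lemma lcbn_ext (R : realType) (K : nat) (E Eb : rel 'I_K) (t : 'I_K -> R) a :
  E =2 Eb -> lcbn_prob E t a = lcbn_prob Eb t a.
Proof.
move=> e; rewrite /lcbn_prob (perm_ext a e); case: (permissible Eb a) => //.
apply: eq_bigr => k _; rewrite /pik.
by rewrite (eq_forallb (fun l => (_ : (E l k ==> a l) = (Eb l k ==> a l)))) // => l; rewrite e.
Qed.

Lemma lcbn_gt0 (R : realType) (K : nat) (E : rel 'I_K) (t : 'I_K -> R) a :
  valid_t t -> permissible E a -> 0 < lcbn_prob E t a.
Proof.
move=> vt pa; rewrite /lcbn_prob pa; apply: prodr_gt0 => k _.
have /andP [t0 t1] := vt k.
by case: (pik E a k) => //; case: (a k) => //; rewrite subr_gt0.
Qed.

Lemma hier_perm (K : nat) (E : rel 'I_K) k l :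
  is_hierarchy E ->
  E k l = (k != l) && [forall a : pattern K, permissible E a ==> (a l ==> a k)].
Proof.
move=> [irr _ tr]; apply/idP/idP.
  move=> ekl; apply/andP; split.
    by apply/eqP => ekl'; move: ekl; rewrite ekl' (negbTE (irr l)).
  apply/forallP => a; apply/implyP => /forallP /(_ k) /forallP /(_ l).
  by rewrite ekl.
case/andP => nkl /forallP /(_ [ffun m => (m == l) || E m l]).
have -> : permissible E [ffun m => (m == l) || E m l].
  apply/forallP => x; apply/forallP => y; apply/implyP => exy; rewrite !ffunE.
  apply/implyP => /orP [/eqP eyl|eyl]; first by rewrite -eyl exy orbT.
  by rewrite (tr _ _ _ exy eyl) orbT.
by rewrite /= !ffunE eqxx /= (negbTE nkl).
Qed.

Lemma t_ident (R : realType) (K : nat) (E : rel 'I_K) (t tb : 'I_K -> R) :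
  is_hierarchy E -> valid_t t -> valid_t tb ->
  (forall a, permissible E a -> lcbn_prob E t a = lcbn_prob E tb a) -> t =1 tb.
Proof.
move=> hE vt vtb hp.
have [irr _ tr] := hE.
pose desc k := [set m | E k m].
suff: forall n k, (#|desc k| < n)%N -> t k = tb k by move=> H k; apply: (H _ k).
elim=> [//|n IH] k ltn.
have IHk : forall m, E k m -> t m = tb m.
  move=> m ekm; apply: IH.
  have prop : desc m \proper desc k.
    apply/properP; split.
      by apply/subsetP => x; rewrite !inE => /(tr _ _ _ ekm).
    by exists m; rewrite !inE ?ekm ?irr.
  exact: (leq_trans (proper_card prop) ltn).
pose a' : pattern K := [ffun m => (m != k) && ~~ E k m].
have pa' : permissible E a'.
  apply/forallP => x; apply/forallP => y; apply/implyP => exy; rewrite !ffunE.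
  apply/implyP => /andP [nyk neky]; apply/andP; split.
    by apply/eqP => exk; move: neky; rewrite -exk exy.
  by apply/negP => ekx; move: neky; rewrite (tr _ _ _ ekx exy).
pose f (u : 'I_K -> R) m := if m == k then 1 - u k else if E k m then 1 else u m.
have lc1 : forall u : 'I_K -> R, lcbn_prob E u (ones K) = \prod_m u m.
  move=> u; rewrite /lcbn_prob perm_ones; apply: eq_bigr => m _.
  have -> : pik E (ones K) m by apply/forallP => l; rewrite ffunE implybT.
  by rewrite ffunE.
have lc2 : forall u : 'I_K -> R, lcbn_prob E u a' = \prod_m f u m.
  move=> u; rewrite /lcbn_prob pa'; apply: eq_bigr => m _; rewrite /f.
  case: (eqVneq m k) => [->|nmk].
    have -> : pik E a' k.
      apply/forallP => l; apply/implyP => elk; rewrite ffunE; apply/andP; split.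
        by apply/eqP => e; move: elk; rewrite e (negbTE (irr k)).
      by apply/negP => ekl; move: (irr k); rewrite (tr _ _ _ ekl elk).
    by rewrite ffunE eqxx.
  case ekm: (E k m).
    suff -> : pik E a' m = false by [].
    by apply/negP => /forallP /(_ k); rewrite ekm ffunE eqxx.
  have -> : pik E a' m.
    apply/forallP => l; apply/implyP => elm; rewrite ffunE; apply/andP; split.
      by apply/eqP => e; move: elm; rewrite e ekm.
    by apply/negP => ekl; move: ekm; rewrite (tr _ _ _ ekl elm).
  by rewrite ffunE nmk ekm.
have e1 := hp _ (perm_ones E); rewrite !lc1 in e1.
have e2 := hp _ pa'; rewrite !lc2 in e2.
pose F (u : 'I_K -> R) := \prod_(m | m != k) f u m.
pose Y (u : 'I_K -> R) := \prod_(m | m != k) (if E k m then u m else 1).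
have split1 : forall u : 'I_K -> R, \prod_m u m = u k * (F u * Y u).
  move=> u; rewrite (bigD1 k) //=; congr (_ * _); rewrite /F /Y -big_split /=.
  apply: eq_bigr => m nmk; rewrite /f (negbTE nmk).
  by case: (E k m); rewrite ?mul1r ?mulr1.
have split2 : forall u : 'I_K -> R, \prod_m f u m = (1 - u k) * F u.
  by move=> u; rewrite (bigD1 k) //= {1}/f eqxx.
have YE : Y t = Y tb.
  by apply: eq_bigr => m _; case ekm: (E k m) => //; apply: IHk.
have Y0 : Y tb != 0.
  apply/prodf_neq0 => m _; case: (E k m); last by rewrite oner_eq0.
  by have /andP [h _] := vtb m; rewrite lt0r_neq0.
rewrite !split1 YE in e1; rewrite !split2 in e2.
have e1' : t k * F t = tb k * F tb.
  by apply: (mulIf Y0); rewrite -!mulrA.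
have FE : F t = F tb.
  have -> : F t = t k * F t + (1 - t k) * F t by ring.
  by rewrite e1' e2; ring.
have F0 : F tb != 0.
  apply/prodf_neq0 => m _; rewrite /f; case: (m == k).
    by have /andP [_ h] := vtb k; rewrite subr_eq0 eq_sym lt_eqF.
  case: (E k m) => //; first by rewrite oner_eq0.
  by have /andP [h _] := vtb m; rewrite lt0r_neq0.
by apply: (mulIf F0); rewrite -[in LHS]FE e1'.
Qed.

Unset Implicit Arguments.

Theorem theoremS1 (R : realType) (J K : nat) (Q : qmatrix J K) (E : rel 'I_K) :
  is_hierarchy E ->
  (* (A) *)
  (exists S1 S2 : {set 'I_J},
     [/\ [disjoint S1 & S2], distinct_cols Q E S1, distinct_cols Q E S2,
         (forall a b : pattern K, permissible E a -> permissible E b ->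
            ge_on Q S1 a b = ge_on Q S2 a b) &
     (* (B) *)
         (forall a b : pattern K, permissible E a -> permissible E b -> a != b ->
            ge_on Q S1 b a || ge_on Q S2 b a ->
            exists2 j, j \notin S1 :|: S2 & Gamma Q j a != Gamma Q j b)]) ->
  (* (C) *)
  (forall a b : pattern K, permissible E a -> ~~ permissible E b ->
     exists j, Gamma Q j a != Gamma Q j b) ->
  (* strict identifiability *)
  forall (Th : 'I_J -> pattern K -> R) (t : 'I_K -> R)
         (Eb : rel 'I_K) (Thb : 'I_J -> pattern K -> R) (tb : 'I_K -> R),
    valid_theta Q E Th -> valid_t t ->
    is_hierarchy Eb -> valid_theta Q Eb Thb -> valid_t tb ->
    (#|[pred a : pattern K | permissible Eb a]| <= #|[pred a : pattern K | permissible E a]|)%N ->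
    (forall r : {ffun 'I_J -> bool}, resp_prob E Th t r = resp_prob Eb Thb tb r) ->
    [/\ E =2 Eb,
        (forall j a, permissible E a -> Th j a = Thb j a) &
        t =1 tb].
Proof.
move=> hE [S1 [S2 [disj dc1 dc2 _ hB]]] hC Th t Eb Thb tb vT vt hEb vTb vtb card hR.
pose p := lcbn_prob E t; pose pb := lcbn_prob Eb tb.
have pp : forall x, permissible E x -> 0 < p x by move=> x; apply: lcbn_gt0.
have ppb : forall y, permissible Eb y -> 0 < pb y by move=> y; apply: lcbn_gt0.
have F1 : forall w : resp J -> R,
    \sum_(x | permissible E x) p x * ev (Th^~ x) w =
    \sum_(y | permissible Eb y) pb y * ev (Thb^~ y) w.
  by move=> w; rewrite -!resp_ev; apply: eq_bigr => r _; rewrite hR.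
have U1 : forall x, exists u : resp J -> R, permissible E x ->
    dep S1 u /\ forall g, permissible E g -> ev (Th^~ g) u = (g == x)%:R.
  move=> x; case px: (permissible E x); last by exists (fun _ => 0).
  by have [u hu] := leftinv vT dc1 px; exists u.
have U2 : forall x, exists u : resp J -> R, permissible E x ->
    dep S2 u /\ forall g, permissible E g -> ev (Th^~ g) u = (g == x)%:R.
  move=> x; case px: (permissible E x); last by exists (fun _ => 0).
  by have [u hu] := leftinv vT dc2 px; exists u.
have [u hu] := fin_all_exists U1.
have [u' hu'] := fin_all_exists U2.
pose a x y := ev (Thb^~ y) (u x).
pose b x y := ev (Thb^~ y) (u' x).
have s21 : S2 \subset ~: S1.
  by apply/subsetP => j j2; rewrite inE (disjointFl disj j2).
have s12 : S1 \subset ~: S2.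
  by apply/subsetP => j j1; rewrite inE (disjointFr disj j1).
have sW1 : ~: (S1 :|: S2) \subset ~: S1.
  by apply/subsetP => j; rewrite !inE negb_or => /andP [].
have sW2 : ~: (S1 :|: S2) \subset ~: S2.
  by apply/subsetP => j; rewrite !inE negb_or => /andP [].
have H1 : forall x x' (g : resp J -> R), permissible E x -> permissible E x' ->
     dep (~: (S1 :|: S2)) g ->
     \sum_(y | permissible Eb y) pb y * a x y * b x' y * ev (Thb^~ y) g
       = (x == x')%:R * p x * ev (Th^~ x) g.
  move=> x x' g px px' dg.
  have [du hux] := hu x px; have [du' hux'] := hu' x' px'.
  have evw : forall th : 'I_J -> R,
      ev th (fun r => u x r * (u' x' r * g r)) = ev th (u x) * (ev th (u' x') * ev th g).
    move=> th; rewrite (ev_mul th (S := S1)) //; last first.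
      by apply: dep_mul; [apply: dep_mono du' | apply: dep_mono dg].
    by rewrite (ev_mul th (S := S2)) //; apply: dep_mono dg.
  have := F1 (fun r => u x r * (u' x' r * g r)).
  under eq_bigr do rewrite evw.
  under [in RHS]eq_bigr do rewrite evw.
  move=> e; transitivity (\sum_(y | permissible Eb y) pb y *
      (ev (Thb^~ y) (u x) * (ev (Thb^~ y) (u' x') * ev (Thb^~ y) g))).
    by apply: eq_bigr => y _; rewrite /a /b; ring.
  rewrite -e (eq_bigr (fun z => (p z * (z == x')%:R * ev (Th^~ z) g) * (x == z)%:R)).
    by rewrite sum_delta px; ring.
  by move=> z pz; rewrite hux // hux' // eq_sym; ring.
have H2 : forall x (v : resp J -> R), permissible E x -> dep S1 v ->
     \sum_(y | permissible Eb y) pb y * b x y * ev (Thb^~ y) v = p x * ev (Th^~ x) v.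
  move=> x v px dv.
  have [du' hux'] := hu' x px.
  have evw : forall th : 'I_J -> R, ev th (fun r => v r * u' x r) = ev th v * ev th (u' x).
    by move=> th; rewrite (ev_mul th (S := S1)) //; apply: dep_mono du'.
  have := F1 (fun r => v r * u' x r).
  under eq_bigr do rewrite evw.
  under [in RHS]eq_bigr do rewrite evw.
  move=> e; transitivity (\sum_(y | permissible Eb y) pb y * (ev (Thb^~ y) v * ev (Thb^~ y) (u' x))).
    by apply: eq_bigr => y _; rewrite /b; ring.
  rewrite -e (eq_bigr (fun z => (p z * ev (Th^~ z) v) * (x == z)%:R)).
    by rewrite sum_delta px.
  by move=> z pz; rewrite hux' // [z == x]eq_sym mulrA.
have H1' : forall x x' (g : resp J -> R), permissible E x -> permissible E x' ->
     dep (~: (S2 :|: S1)) g ->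
     \sum_(y | permissible Eb y) pb y * b x y * a x' y * ev (Thb^~ y) g
       = (x == x')%:R * p x * ev (Th^~ x) g.
  move=> x x' g px px'; rewrite setUC => dg.
  rewrite (eq_bigr (fun y => pb y * a x' y * b x y * ev (Thb^~ y) g)); last first.
    by move=> y _; ring.
  rewrite (H1 x' x g px' px dg); case: (eqVneq x x') => [->|ne]; first by [].
  by rewrite ?mul0r ?mulr0n ?mul0r.
have H2' : forall x (v : resp J -> R), permissible E x -> dep S2 v ->
     \sum_(y | permissible Eb y) pb y * a x y * ev (Thb^~ y) v = p x * ev (Th^~ x) v.
  move=> x v px dv.
  have [du hux] := hu x px.
  have evw : forall th : 'I_J -> R, ev th (fun r => v r * u x r) = ev th v * ev th (u x).
    by move=> th; rewrite (ev_mul th (S := S2)) //; apply: dep_mono du.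
  have := F1 (fun r => v r * u x r).
  under eq_bigr do rewrite evw.
  under [in RHS]eq_bigr do rewrite evw.
  move=> e; transitivity (\sum_(y | permissible Eb y) pb y * (ev (Thb^~ y) v * ev (Thb^~ y) (u x))).
    by apply: eq_bigr => y _; rewrite /a; ring.
  rewrite -e (eq_bigr (fun z => (p z * ev (Th^~ z) v) * (x == z)%:R)).
    by rewrite sum_delta px.
  by move=> z pz; rewrite hux // [z == x]eq_sym mulrA.
have hB1 : forall x x', permissible E x -> permissible E x' -> x != x' -> ge_on Q S1 x' x ->
      exists2 j, j \notin S1 :|: S2 & Gamma Q j x != Gamma Q j x'.
  by move=> x x' px px' ne ge; apply: hB => //; rewrite ge.
have hB2 : forall x x', permissible E x -> permissible E x' -> x != x' -> ge_on Q S2 x' x ->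
      exists2 j, j \notin S2 :|: S1 & Gamma Q j x != Gamma Q j x'.
  by move=> x x' px px' ne ge; rewrite setUC; apply: hB => //; rewrite ge orbT.
have Hs1 := half vT pp ppb card hB1 H1 H2.
have Hs2 := half vT pp ppb card hB2 H1' H2'.
have SG1 : forall y, exists x, permissible Eb y -> permissible E x /\
    (forall x', permissible E x' -> a x' y = (x' == x)%:R) /\
    (forall j, j \notin S2 -> Thb j y = Th j x).
  move=> y; case py: (permissible Eb y); last by exists y.
  by have [x px [h1 h2]] := Hs1 y py; exists x.
have SG2 : forall y, exists x, permissible Eb y -> permissible E x /\
    (forall x', permissible E x' -> b x' y = (x' == x)%:R) /\
    (forall j, j \notin S1 -> Thb j y = Th j x).
  move=> y; case py: (permissible Eb y); last by exists y.
  by have [x px [h1 h2]] := Hs2 y py; exists x.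
have [sg hsg] := fin_all_exists SG1.
have [tg htg] := fin_all_exists SG2.
have st : forall y, permissible Eb y -> sg y = tg y.
  move=> y py; have [ps [as1 th1]] := hsg y py; have [pt [bt th2]] := htg y py.
  apply/eqP; apply/negPn/negP => ne.
  have := H1 (sg y) (tg y) (fun _ => 1) ps pt (@dep_cst R J _ 1).
  rewrite ev_const (negbTE ne) !mul0r => e.
  have : 0 < \sum_(y' | permissible Eb y') pb y' * a (sg y) y' * b (tg y) y' * ev (Thb^~ y') (fun _ => 1).
    rewrite (bigD1 y) //= as1 // bt // !eqxx ev_const !mulr1.
    apply: ltr_wpDr; last exact: ppb.
    apply: sumr_ge0 => y' /andP [py' _]; rewrite ev_const mulr1.
    have [ps' [as1' _]] := hsg y' py'; have [pt' [bt' _]] := htg y' py'.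
    rewrite as1' // bt' //; apply: mulr_ge0; [apply: mulr_ge0; [exact: ltW (ppb y' py')|] |];
      by case: eqP.
  by rewrite e ltxx.
have thE : forall y j, permissible Eb y -> Thb j y = Th j (sg y).
  move=> y j py; have [_ [_ th1]] := hsg y py; have [_ [_ th2]] := htg y py.
  case j2: (j \in S2); last by apply: th1; rewrite j2.
  by rewrite st // th2 // (disjointFl disj j2).
have surj : forall x, permissible E x -> exists2 y, permissible Eb y & sg y = x.
  move=> x px.
  have := H1 x x (fun _ => 1) px px (@dep_cst R J _ 1).
  rewrite ev_const eqxx mul1r mulr1 => e.
  case: (boolP [exists y, permissible Eb y && (a x y != 0)]) => [/existsP [y /andP [py ay]]|/existsPn hn].
    exists y => //; have [_ [as1 _]] := hsg y py.
    move: ay; rewrite as1 //; case: (eqVneq x (sg y)) => [-> //|_]; by rewrite ?mulr0n eqxx.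
  move: (pp x px); rewrite -e big1 ?ltxx // => y py.
  by move: (hn y); rewrite py /= negbK => /eqP ->; rewrite !mulr0 !mul0r.
have hh : forall j, Thb j (ones K) = Th j (ones K).
  move=> j; apply/le_anti/andP; split.
    by rewrite thE ?perm_ones // (th_le _ vT); have [ps _] := hsg _ (perm_ones Eb).
  have [y0 py0 sy0] := surj _ (perm_ones E).
  by rewrite -{1}sy0 -thE //; exact: th_le vTb py0.
have PE : forall y, permissible Eb y -> permissible E y /\ sg y = y.
  move=> y py; have [ps _] := hsg y py.
  have gE : forall j, Gamma Q j y = Gamma Q j (sg y).
    by move=> j; rewrite (gammaE _ vTb py) (gammaE _ vT ps) hh thE.
  have pey : permissible E y.
    apply/negPn/negP => npy; have [j] := hC (sg y) y ps npy.
    by rewrite gE eqxx.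
  split => //; apply/eqP; apply/negPn/negP => ne.
  have [j _] := dc1 (sg y) y ps pey ne.
  by rewrite gE eqxx.
have permE : forall x, permissible E x = permissible Eb x.
  move=> x; apply/idP/idP => [px|py]; last by case: (PE x py).
  have [y py sy] := surj x px.
  by have [_ e] := PE y py; rewrite -sy e.
have EE : E =2 Eb.
  move=> k l; rewrite (hier_perm k l hE) (hier_perm k l hEb).
  by congr (_ && _); apply: eq_forallb => x; rewrite permE.
have pE : forall x, permissible E x -> p x = pb x.
  move=> x px.
  have := H1 x x (fun _ => 1) px px (@dep_cst R J _ 1).
  rewrite ev_const eqxx mul1r mulr1 => <-.
  have pbx : permissible Eb x by rewrite -permE.
  rewrite (eq_bigr (fun y => pb y * (x == y)%:R)); first by rewrite sum_delta pbx.
  move=> y py; have [ps [as1 _]] := hsg y py; have [_ [bt _]] := htg y py.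
  rewrite ev_const mulr1 as1 // bt // -st //; have [_ ->] := PE y py.
  by rewrite eq_sym; case: eqP; rewrite ?mulr1 ?mulr0.
split => //.
  move=> j x px; have pbx : permissible Eb x by rewrite -permE.
  by rewrite thE //; have [_ ->] := PE x pbx.
apply: (t_ident hE vt vtb) => x px.
by rewrite -/(p x) pE // /pb (lcbn_ext tb x EE).
Qed.
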